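(* Under the standing assumptions (all robots have the same turning radius $r$; the group allocation satisfies the distinctness conditions, which is possible with $m=\lceil\log_2(n+2)\rceil+1$ groups; $G_m=\emptyset$), the following hold. (i) For every initial state, every robot $k$ and every vector $v\in\mathbb R^2$, there is a finite activation sequence whose net effect translates robot $k$ by $v$ and leaves the positions of all other robots unchanged. (ii) Consequently the swarm, with inputs $u$ measurable and taking values in $(0,\infty)$, is small-time locally controllable in positions at every initial state $(p_0,\Theta_0)$: $p_0$ lies in the interior of $\mathcal R_{(p_0,\Theta_0)}(T)$ for every $T>0$.
   Context: A swarm of $n$ planar robots; robot $j$ has state $(x_j,y_j,\theta_j)$, $\theta_j$ mod $2\pi$; all robots have the same turning radius $r>0$. Groups $G_1,\dots,G_m$ with activation vectors $\alpha_i\in\{0,1\}^n$ ($\alpha_{i,j}=1$ iff robot $j\in G_i$); standing assumptions: the patterns $(\alpha_{1,j},\dots,\alpha_{m-1,j})$, $j=1,\dots,n$, are pairwise distinct, none all zeros and none all ones, and $G_m=\emptyset$. Dynamics: a switching signal $\nu(t)\in\{1,\dots,m\}$ selects the active group and a scalar input $u(t)>0$ is applied; with $a_j=\alpha_{\nu(t),j}$, robot $j$ obeys $\dot x_j=a_j\cos\theta_j\,u$, $\dot y_j=a_j\sin\theta_j\,u$, $\dot\theta_j=(1-a_j)u/r$ (members of the active group translate forward, all others rotate counterclockwise in place). Write $p=(x_1,y_1,\dots,x_n,y_n)\in\mathbb R^{2n}$ for the positions and $\Theta=(\theta_1,\dots,\theta_n)$ for the orientations. $\mathcal R_{(p_0,\Theta_0)}(T)$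 is the set of all position vectors $p(t)$, $0\le t\le T$, reachable by trajectories starting at $(p_0,\Theta_0)$. The system is small-time locally controllable (STLC) in positions at $(p_0,\Theta_0)$ if $p_0$ is in the interior of $\mathcal R_{(p_0,\Theta_0)}(T)$ for all $T>0$. *)

(* Defs.v *)
From HB Require Import structures.
From mathcomp Require Import all_boot all_order all_algebra.
From mathcomp Require Import all_classical all_reals all_analysis.
Set Implicit Arguments. Unset Strict Implicit. Unset Printing Implicit Defensive.
Import Order.TTheory GRing.Theory Num.Theory numFieldNormedType.Exports.
Local Open Scope classical_set_scope.
Local Open Scope ring_scope.

(* Groups are indexed by 'I_m.+1 : the paper's G_1,...,G_m correspond to the
   ordinals 0..m (so the paper's "m" is our m.+1); the paper's G_m is ord_max.
   alpha i j = true iff robot j belongs to group i. *)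

Definition pattern (n m : nat) (alpha : 'I_m.+1 -> 'I_n -> bool) (j : 'I_n)
  : {ffun 'I_m -> bool} :=
  [ffun i : 'I_m => alpha (widen_ord (leqnSn m) i) j].

Definition standing_assumptions (n m : nat) (alpha : 'I_m.+1 -> 'I_n -> bool)
  : Prop :=
  [/\ injective (pattern alpha),
      (forall j, exists i, pattern alpha j i),
      (forall j, exists i, ~~ pattern alpha j i)
    & (forall j, alpha ord_max j = false)].

Definition state (R : realType) (n : nat) :=
  (('I_n -> R) * ('I_n -> R) * ('I_n -> R))%type.

(* Exact net effect of activating group i with input of integral tau > 0
   (i.e. the solution of the dynamics with nu = i over an interval on which
   the integral of u equals tau): members translate by tau along their
   heading, non-members rotate in place by tau / r. *)
Definition step (R : realType) (n M : nat) (alpha : 'I_M -> 'I_n -> bool)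
  (r : R) (i : 'I_M) (tau : R) (s : state R n) : state R n :=
  let: (x, y, th) := s in
  (fun j => x j + (alpha i j)%:R * tau * cos (th j),
   fun j => y j + (alpha i j)%:R * tau * sin (th j),
   fun j => th j + (1 - (alpha i j)%:R) * tau / r).

Definition run (R : realType) (n M : nat) (alpha : 'I_M -> 'I_n -> bool)
  (r : R) (acts : seq ('I_M * R)) (s : state R n) : state R n :=
  foldl (fun s a => step alpha r a.1 a.2 s) s acts.

(* Switching signal on [0,T]: piecewise constant with finitely many
   switching times ts (values at switching times are irrelevant). *)
Definition switching_signal (R : realType) (M : nat) (T : R) (nu : R -> 'I_M)
  : Prop :=
  exists ts : seq R, forall t1 t2 : R, 0 <= t1 -> t1 <= t2 -> t2 <= T ->
    (forall s, s \in ts -> ~ (t1 <= s <= t2)) -> nu t1 = nu t2.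

(* Admissible input on [0,T]: measurable, with values in (0, oo), and
   (Lebesgue) integrable so that the dynamics has Caratheodory solutions. *)
Definition admissible_input (R : realType) (T : R) (u : R -> R) : Prop :=
  [/\ measurable_fun `[0, T] u,
      (forall t, 0 <= t <= T -> 0 < u t)
    & (@lebesgue_measure R).-integrable `[0, T] (EFin \o u)].

(* (x, y, th) is a (Caratheodory) solution on [0,T] of
     xdot_j = a_j cos th_j u, ydot_j = a_j sin th_j u, thdot_j = (1-a_j) u / r,
   a_j = alpha (nu t) j, from (x0, y0, th0). *)
Definition is_trajectory (R : realType) (n M : nat)
  (alpha : 'I_M -> 'I_n -> bool) (r T : R) (nu : R -> 'I_M) (u : R -> R)
  (x0 y0 th0 : 'I_n -> R) (x y th : R -> 'I_n -> R) : Prop :=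
  forall t, 0 <= t <= T -> forall j : 'I_n,
    [/\ th t j = th0 j + Rintegral (@lebesgue_measure R) `[0, t]
                   (fun s => (1 - (alpha (nu s) j)%:R) * u s / r),
        x t j = x0 j + Rintegral (@lebesgue_measure R) `[0, t]
                   (fun s => (alpha (nu s) j)%:R * cos (th s j) * u s)
      & y t j = y0 j + Rintegral (@lebesgue_measure R) `[0, t]
                   (fun s => (alpha (nu s) j)%:R * sin (th s j) * u s)].

(* Position vector p = (x_1,y_1,...,x_n,y_n), stored as an n x 2 matrix
   (row j = (x_j, y_j)); 'M[R]_(n,2) carries the standard topology of R^{2n}. *)
Definition posmx (R : realType) (n : nat) (x y : 'I_n -> R) : 'M[R]_(n, 2) :=
  \matrix_(j, k) if k == 0 then x j else y j.

Definition reachable (R : realType) (n M : nat) (alpha : 'I_M -> 'I_n -> bool)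
  (r : R) (x0 y0 th0 : 'I_n -> R) (T : R) : set 'M[R]_(n, 2) :=
  [set p | exists (nu : R -> 'I_M) (u : R -> R) (x y th : R -> 'I_n -> R) (t : R),
     [/\ switching_signal T nu, admissible_input T u,
         is_trajectory alpha r T nu u x0 y0 th0 x y th,
         0 <= t <= T & p = posmx (x t) (y t)]].

Definition STLC_positions (R : realType) (n M : nat)
  (alpha : 'I_M -> 'I_n -> bool) (r : R) (x0 y0 th0 : 'I_n -> R) : Prop :=
  forall T : R, 0 < T -> interior (reachable alpha r x0 y0 th0 T) (posmx x0 y0).

(* Main.v *)
Require Import Defs.
From HB Require Import structures.
From mathcomp Require Import all_boot all_order all_algebra.
From mathcomp Require Import all_classical all_reals all_analysis.
From mathcomp Require Import ring lra.
Import Order.TTheory GRing.Theory Num.Theory numFieldNormedType.Exports.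
Local Open Scope classical_set_scope.
Local Open Scope ring_scope.
Set Implicit Arguments. Unset Strict Implicit. Unset Printing Implicit Defensive.


Section Disc.
Variables (R : realType) (m : nat) (r : R).
Local Notation M := m.+1.
Hypothesis r0 : 0 < r.
Let rn0 : r != 0. Proof. by rewrite gt_eqF. Qed.

Definition rot (p : R) (w : R * R) : R * R :=
  (cos p * w.1 - sin p * w.2, sin p * w.1 + cos p * w.2).

Fixpoint WW (a : 'I_M -> bool) (acts : seq ('I_M * R)) : R * R :=
  match acts with
  | [::] => (0, 0)
  | p :: s => let b := (a p.1)%:R in
      let w := rot ((1 - b) * p.2 / r) (WW a s) in (b * p.2 + w.1, w.2)
  end.

Fixpoint PP (a : 'I_M -> bool) (acts : seq ('I_M * R)) : R :=
  match acts with
  | [::] => 0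
  | p :: s => (1 - (a p.1)%:R) * p.2 / r + PP a s
  end.

Lemma rotrot p q w : rot p (rot q w) = rot (p + q) w.
Proof. rewrite /rot /= cosD sinD; congr (_, _); ring. Qed.

Lemma rot0w p : rot p (0, 0) = (0, 0).
Proof. by rewrite /rot /= !mulr0 subr0 addr0. Qed.

Lemma WW_cat a s1 s2 :
  WW a (s1 ++ s2) = ((WW a s1).1 + (rot (PP a s1) (WW a s2)).1,
                     (WW a s1).2 + (rot (PP a s1) (WW a s2)).2).
Proof.
elim: s1 => [|p s IH] /=.
  by case: (WW a s2) => ? ? ; rewrite /rot cos0 sin0 /=; congr (_, _); ring.
rewrite IH /= !cosD !sinD; congr (_, _); ring.
Qed.

Lemma PP_cat a s1 s2 : PP a (s1 ++ s2) = PP a s1 + PP a s2.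
Proof. by elim: s1 => [|p s IH] /=; rewrite ?add0r // IH addrA. Qed.

Definition good (p : R) := cos p = 1 /\ sin p = 0.

Lemma rot_good p w : good p -> rot p w = w.
Proof. by case=> c s; case: w => ? ?; rewrite /rot c s /=; congr (_,_); ring. Qed.

Lemma goodD p q : good p -> good q -> good (p + q).
Proof. by case=> c s [c' s']; rewrite /good cosD sinD c s c' s'; split; ring. Qed.

Lemma good0 : good 0. Proof. by rewrite /good cos0 sin0. Qed.
Lemma good2pi : good (pi *+ 2). Proof. by rewrite /good cos2pi sin2pi. Qed.

Lemma good_nat (N : nat) : good (pi *+ 2 * N%:R).
Proof.
elim: N => [|N IH]; first by rewrite mulr0; exact: good0.
have -> : (pi : R) *+ 2 * N.+1%:R = pi *+ 2 * N%:R + pi *+ 2 by rewrite -[N.+1]addn1 natrD mulrDr mulr1.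
exact: goodD IH good2pi.
Qed.

Lemma exists_good (x : R) : exists rho, 0 < rho /\ good (x + rho).
Proof.
have pi2 : 0 < (pi : R) *+ 2 by rewrite mulrn_wgt0 // pi_gt0.
pose N := Num.bound (`|x| / (pi *+ 2)).
have HN : `|x| / (pi *+ 2) < N%:R by apply: archi_boundP; rewrite divr_ge0 // ltW.
exists (pi *+ 2 * N.+1%:R - x); split.
  have : `|x| < pi *+ 2 * N%:R by rewrite -ltr_pdivrMl // mulrC.
  rewrite -[N.+1]addn1 natrD mulrDr mulr1 => h.
  have := ler_norm x; lra.
by rewrite addrC subrK; exact: good_nat.
Qed.


Lemma WW1 a i t : WW a [:: (i, t)] = ((a i)%:R * t, 0).
Proof. rewrite /= /rot /=; congr (_, _); ring. Qed.

Lemma PP1 a i t : PP a [:: (i, t)] = (1 - (a i)%:R) * t / r.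
Proof. by rewrite /= addr0. Qed.

Definition allrot (rho : R) : seq ('I_M * R) := [:: (ord_max, rho * r)].

Lemma allrotW a rho : a ord_max = false -> WW a (allrot rho) = (0, 0).
Proof. by move=> h; rewrite WW1 h mul0r. Qed.

Lemma allrotP a rho : a ord_max = false -> PP a (allrot rho) = rho.
Proof. by move=> h; rewrite PP1 h subr0 mul1r mulrK // unitfE rn0. Qed.

Definition Rl (l : 'I_M) (rho : R) : seq ('I_M * R) :=
  [:: (l, rho * r / 2)] ++ (allrot pi ++ ([:: (l, rho * r / 2)] ++ allrot pi)).

Lemma RlW a l rho : a ord_max = false -> WW a (Rl l rho) = (0, 0).
Proof.
move=> h; rewrite /Rl !WW_cat !allrotW // !allrotP // !WW1 !PP1.
case: (a l); rewrite /rot /= ?mulr1n ?mulr0n ?subrr ?mul0r ?cos0 ?sin0 ?cospi ?sinpi;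
  congr (_, _); ring.
Qed.

Lemma RlP a l rho : a ord_max = false ->
  PP a (Rl l rho) = (1 - (a l)%:R) * rho + pi *+ 2.
Proof.
move=> h; rewrite /Rl !PP_cat !allrotP // !PP1.
by rewrite mulr2n; field.
Qed.


Lemma rot_goodD p q w : good p -> rot (p + q) w = rot q w.
Proof. by move=> g; rewrite -rotrot rot_good. Qed.

Lemma rot_pi w : rot pi w = (- w.1, - w.2).
Proof. by rewrite /rot cospi sinpi; congr (_, _); ring. Qed.

Definition posl (s : seq ('I_M * R)) := all (fun p => 0 < p.2) s.

Definition base (i : 'I_M) (t rho : R) := [:: (i, t)] ++ Rl i rho.

Lemma baseE a i t rho : a ord_max = false -> good (t / r + rho) ->
  WW a (base i t rho) = ((a i)%:R * t, 0) /\ good (PP a (base i t rho)).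
Proof.
move=> h g; rewrite /base WW_cat PP_cat RlW // RlP // rot0w WW1 PP1 /= !addr0.
split => //; case: (a i).
  rewrite subrr !mul0r !add0r; exact: good2pi.
rewrite /= ?mulr0n subr0 !mul1r addrA; exact: goodD g good2pi.
Qed.

Definition mid (b : 'I_M) (v : bool) :=
  if v then allrot pi ++ (allrot pi ++ Rl b pi) else allrot pi ++ Rl b pi.

Lemma midW a b v : a ord_max = false -> WW a (mid b v) = (0, 0).
Proof.
move=> h; case: v; rewrite /mid ?(WW_cat a (allrot pi) (allrot pi ++ Rl b pi)) (WW_cat a (allrot pi) (Rl b pi)) RlW // allrotW // !rot0w /=;
  congr (_, _); ring.
Qed.

Lemma midP a b v : a ord_max = false ->
  PP a (mid b v) = (if v then pi + pi else pi) + ((1 - (a b)%:R) * pi + pi *+ 2).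
Proof.
by move=> h; case: v; rewrite /mid ?(PP_cat a (allrot pi) (allrot pi ++ Rl b pi)) (PP_cat a (allrot pi) (Rl b pi)) RlP // allrotP // addrA.
Qed.

Definition F (b : 'I_M) (v : bool) (s : seq ('I_M * R)) :=
  s ++ (mid b v ++ (s ++ mid b v)).

Lemma FE a b v s : a ord_max = false -> good (PP a s) ->
  WW a (F b v s) = (if a b == v then ((WW a s).1 *+ 2, (WW a s).2 *+ 2)
                    else (0, 0)) /\ good (PP a (F b v s)).
Proof.
move=> h g.
have [q [gq Eq]] : exists q : R, good q /\ PP a (mid b v) = q + (if a b == v then 0 else pi).
  rewrite midP //; case: v; case: (a b) => /=.
  - exists (pi *+ 2 * 2%:R); split; first exact: good_nat.
    rewrite mulr2n; ring.
  - exists (pi *+ 2 * 2%:R); split; first exact: good_nat.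
    rewrite mulr2n; ring.
  - exists (pi *+ 2 * 1%:R); split; first exact: good_nat.
    rewrite mulr2n; ring.
  - exists (pi *+ 2 * 2%:R); split; first exact: good_nat.
    rewrite mulr2n; ring.
split.
  rewrite /F (WW_cat a s (mid b v ++ (s ++ mid b v))) (WW_cat a (mid b v) (s ++ mid b v)) (WW_cat a s (mid b v)) !midW // !rot0w /= !addr0 !add0r.
  have [-> ->] := g; rewrite Eq cosD sinD; have [-> ->] := gq.
  case: (a b == v); rewrite ?cos0 ?sin0 ?cospi ?sinpi; congr (_, _);
    rewrite ?mulr2n; ring.
rewrite /F (PP_cat a s (mid b v ++ (s ++ mid b v))) (PP_cat a (mid b v) (s ++ mid b v)) (PP_cat a s (mid b v)) Eq.
have -> : PP a s + (q + (if a b == v then 0 else pi) +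
    (PP a s + (q + (if a b == v then 0 else pi)))) =
    PP a s + PP a s + (q + q) + (if a b == v then 0 else pi *+ 2).
  case: (a b == v); rewrite ?mulr2n; ring.
apply: goodD; [apply: goodD; [exact: goodD|exact: goodD]|].
by case: (a b == v); [exact: good0|exact: good2pi].
Qed.


Fixpoint filtall (s : seq ('I_M * R)) (l : seq ('I_M * bool)) :=
  match l with
  | [::] => s
  | p :: l' => filtall (F p.1 p.2 s) l'
  end.

Lemma filtallE a l s : a ord_max = false -> good (PP a s) ->
  WW a (filtall s l) =
    (if all (fun p => a p.1 == p.2) l then
       ((WW a s).1 * 2 ^+ size l, (WW a s).2 * 2 ^+ size l) else (0, 0))
  /\ good (PP a (filtall s l)).
Proof.
elim: l s => [|p l IH] s h g /=.
  by rewrite !expr0 !mulr1; case: (WW a s).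
have [E1 g1] := FE p.1 p.2 h g.
have [-> g2] := IH _ h g1; split => //.
rewrite E1; case: (a p.1 == p.2) => /=; last by case: all => //=; rewrite !mul0r.
case: all => //; rewrite exprS /=; congr (_, _); rewrite mulr2n; ring.
Qed.

Lemma posl_cat s1 s2 : posl (s1 ++ s2) = posl s1 && posl s2.
Proof. exact: all_cat. Qed.

Lemma allrot_pos rho : 0 < rho -> posl (allrot rho).
Proof. by move=> h; rewrite /posl /= andbT mulr_gt0. Qed.

Lemma Rl_pos l rho : 0 < rho -> posl (Rl l rho).
Proof.
move=> h; rewrite /Rl !posl_cat allrot_pos ?pi_gt0 //= andbT.
by rewrite ?andbb divr_gt0 ?mulr_gt0.
Qed.

Lemma F_pos b v s : posl s -> posl (F b v s).
Proof.
move=> h; have hm : posl (mid b v).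
  case: v; rewrite /mid ?(posl_cat (allrot pi) (allrot pi ++ Rl b pi))
    (posl_cat (allrot pi) (Rl b pi)) allrot_pos ?Rl_pos ?pi_gt0 //.
by rewrite /F (posl_cat s) (posl_cat (mid b v)) (posl_cat s) h hm.
Qed.

Lemma filtall_pos s l : posl s -> posl (filtall s l).
Proof. by elim: l s => [|p l IH] s h //=; apply/IH/F_pos. Qed.

Lemma Op_ex (i0 : 'I_M) (l : seq ('I_M * bool)) (t : R) : 0 < t ->
  exists s, posl s /\ forall a, a ord_max = false ->
    WW a s = (if a i0 && all (fun p => a p.1 == p.2) l
              then (t * 2 ^+ size l, 0) else (0, 0)) /\ good (PP a s).
Proof.
move=> t0; have [rho [rho0 grho]] := exists_good (t / r).
exists (filtall (base i0 t rho) l); split.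
  apply: filtall_pos; rewrite /base posl_cat Rl_pos // /posl /= !andbT //.
move=> a h; have [E1 g1] := baseE i0 h grho.
have [-> g2] := filtallE l h g1; split => //.
rewrite E1 /=; case: (a i0); case: all => //=; rewrite ?mul1r ?mul0r //.
Qed.

Lemma Dir_ex (rho : R) s : 0 < rho -> posl s ->
  exists s', posl s' /\ forall a, a ord_max = false -> good (PP a s) ->
    WW a s' = rot rho (WW a s) /\ good (PP a s').
Proof.
move=> rho0 ps; have [rho' [rho'0 g']] := exists_good rho.
exists (allrot rho ++ (s ++ allrot rho')); split.
  by rewrite !posl_cat ps !allrot_pos.
move=> a h g; split.
  rewrite (WW_cat a (allrot rho) (s ++ allrot rho')) (WW_cat a s (allrot rho'))
     !allrotW // allrotP // rot0w /= !addr0 !add0r.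
  by case: (WW a s).
rewrite (PP_cat a (allrot rho) (s ++ allrot rho')) (PP_cat a s (allrot rho'))
   !allrotP //.
have -> : rho + (PP a s + rho') = PP a s + (rho + rho') by ring.
exact: goodD.
Qed.


Lemma WW_catg a s1 s2 : good (PP a s1) ->
  WW a (s1 ++ s2) = ((WW a s1).1 + (WW a s2).1, (WW a s1).2 + (WW a s2).2).
Proof. by move=> g; rewrite WW_cat rot_good. Qed.

Lemma PP_catg a s1 s2 : good (PP a s1) -> good (PP a s2) -> good (PP a (s1 ++ s2)).
Proof. by move=> g1 g2; rewrite PP_cat; exact: goodD. Qed.

Lemma vec_ex (i0 : 'I_M) (l : seq ('I_M * bool)) (w : R * R) :
  exists s, posl s /\ forall a, a ord_max = false ->
    WW a s = (if a i0 && all (fun p => a p.1 == p.2) l then w else (0, 0))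
    /\ good (PP a s).
Proof.
set K : R := 2 ^+ size l.
have K0 : 0 < K by rewrite exprn_gt0.
set L := `|w.1| + `|w.2| + 1.
have L0 : 0 < L by rewrite ltr_pwDr // addr_ge0.
have w1L : 0 < w.1 + L.
  have := ler_norm (- w.1); rewrite normrN /L => h.
  have := normr_ge0 w.2; lra.
have w2L : 0 < w.2 + L.
  have := ler_norm (- w.2); rewrite normrN /L => h.
  have := normr_ge0 w.1; lra.
have pi0 : (0 : R) < pi by exact: pi_gt0.
have pih0 : (0 : R) < pi / 2 by rewrite divr_gt0.
have [s1 [p1 E1]] := Op_ex i0 l (divr_gt0 w1L K0).
have [s2' [p2' E2']] := Op_ex i0 l (divr_gt0 w2L K0).
have [s2 [p2 E2]] := Dir_ex pih0 p2'.
have [s3' [p3' E3']] := Op_ex i0 l (divr_gt0 L0 K0).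
have [s3 [p3 E3]] := Dir_ex pi0 p3'.
have [s4' [p4' E4']] := Op_ex i0 l (divr_gt0 L0 K0).
have [s4'' [p4'' E4'']] := Dir_ex pih0 p4'.
have [s4 [p4 E4]] := Dir_ex pi0 p4''.
exists (s1 ++ (s2 ++ (s3 ++ s4))); split.
  by rewrite !posl_cat p1 p2 p3 p4.
move=> a h.
have [W1 g1] := E1 a h.
have [W2' g2'] := E2' a h; have [W2 g2] := E2 a h g2'.
have [W3' g3'] := E3' a h; have [W3 g3] := E3 a h g3'.
have [W4' g4'] := E4' a h; have [W4'' g4''] := E4'' a h g4'.
have [W4 g4] := E4 a h g4''.
split; last by do 3 (apply: PP_catg => //).
rewrite !WW_catg // ?(PP_catg g3 g4) ?(PP_catg g2 (PP_catg g3 g4)) //.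
rewrite W1 W2 W3 W4 W2' W3' W4'' W4' /K.
have Kn : K != 0 by rewrite gt_eqF.
case: (_ && _); rewrite /rot /= ?cospi ?sinpi ?cos_pihalf ?sin_pihalf
  ?mulr0 ?mul0r ?subr0 ?addr0; last by congr (_, _); ring.
rewrite -/K !divfK //; case: w {w1L w2L E1 E2 E3 E4 E2' E3' E4' E4'' W1 W2 W3 W4 W2' W3' W4' W4'' L0} L => w1 w2 L /=; congr (_, _); ring. Qed.



Lemma run_eq n (alpha : 'I_M -> 'I_n -> bool) acts x0 y0 th0 j :
  let W := WW (alpha^~ j) acts in
  [/\ (run alpha r acts (x0, y0, th0)).1.1 j
        = x0 j + cos (th0 j) * W.1 - sin (th0 j) * W.2,
      (run alpha r acts (x0, y0, th0)).1.2 j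
        = y0 j + sin (th0 j) * W.1 + cos (th0 j) * W.2
    & (run alpha r acts (x0, y0, th0)).2 j = th0 j + PP (alpha^~ j) acts].
Proof.
elim: acts x0 y0 th0 => [|p s IH] x0 y0 th0.
  by rewrite /=; split; ring.
have -> : run alpha r (p :: s) (x0, y0, th0) =
  run alpha r s (step alpha r p.1 p.2 (x0, y0, th0)) by [].
rewrite /step.
set x1 := fun j0 => _; set y1 := fun j0 => _; set th1 := fun j0 => _.
case: (IH x1 y1 th1) => -> -> ->.
rewrite /x1 /y1 /th1 /= /rot cosD sinD; split; ring.
Qed.

End Disc.

Section Part1.
Variables (R : realType) (n m : nat) (alpha : 'I_m.+1 -> 'I_n -> bool) (r : R).
Hypothesis r0 : 0 < r.
Hypothesis H : standing_assumptions alpha.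

Lemma move_one x0 y0 th0 k (v : R * R) : exists acts, posl acts /\
  forall j, (run alpha r acts (x0, y0, th0)).1.1 j = x0 j + (if j == k then v.1 else 0)
         /\ (run alpha r acts (x0, y0, th0)).1.2 j = y0 j + (if j == k then v.2 else 0).
Proof.
case: H => inj nz _ gm.
have [i ik] := nz k; rewrite /pattern ffunE in ik.
pose l := [seq (widen_ord (leqnSn m) b, alpha (widen_ord (leqnSn m) b) k) | b <- enum 'I_m].
pose c := cos (th0 k); pose s := sin (th0 k).
have [acts [pa E]] := vec_ex r0 (widen_ord (leqnSn m) i) l
   (c * v.1 + s * v.2, - s * v.1 + c * v.2).
exists acts; split => // j.
have [Wj _] := E (alpha^~ j) (gm j).
have [-> -> _] := run_eq r alpha acts x0 y0 th0 j; rewrite Wj.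
have -> : (alpha (widen_ord (leqnSn m) i) j &&
          all (fun p => alpha p.1 j == p.2) l) = (j == k).
  case: eqP => [->|njk].
    rewrite ik /=; apply/allP => p /mapP [b _ ->] /=; exact: eqxx.
  apply/negbTE/negP => /andP [_ /allP A]; apply: njk; apply: inj.
  apply/ffunP => b; rewrite !ffunE; apply/eqP.
  by have := A _ (map_f (fun b => (widen_ord (leqnSn m) b,
                alpha (widen_ord (leqnSn m) b) k)) (mem_enum _ b)).
case: eqP => [->|_] /=; last by split; ring.
have h := cos2Dsin2 (th0 k); rewrite -/c -/s in h *.
split.
  rewrite -[X in _ = _ + X]mul1r -h; ring.
rewrite -[X in _ = _ + X]mul1r -h; ring.
Qed.

Lemma move_all x0 y0 th0 (d : 'I_n -> R * R) (L : seq 'I_n) : uniq L ->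
  exists acts, posl acts /\ forall j,
    (run alpha r acts (x0, y0, th0)).1.1 j = x0 j + (if j \in L then (d j).1 else 0)
 /\ (run alpha r acts (x0, y0, th0)).1.2 j = y0 j + (if j \in L then (d j).2 else 0).
Proof.
elim: L x0 y0 th0 => [|k L IH] x0 y0 th0.
  by move=> _; exists [::]; split => // j /=; rewrite !addr0.
rewrite cons_uniq => /andP [kL uL].
have [a1 [p1 E1]] := move_one x0 y0 th0 k (d k).
case Er: (run alpha r a1 (x0, y0, th0)) E1 => [[x1 y1] th1] E1.
have [a2 [p2 E2]] := IH x1 y1 th1 uL.
exists (a1 ++ a2); split; first by rewrite posl_cat p1 p2.
move=> j; rewrite /run foldl_cat -/(run alpha r a1 _) Er -/(run alpha r a2 _).
have [-> ->] := E2 j; have [/= -> ->] := E1 j.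
rewrite in_cons; case: eqP => [->|_] /=.
  by rewrite (negbTE kL) !addr0.
by rewrite !addr0.
Qed.

End Part1.


Section Ana.
Variable R : realType.
Local Notation mu := (@lebesgue_measure R).

Lemma integrable_set1 (f : R -> R) (x : R) : mu.-integrable [set x] (EFin \o f).
Proof.
apply: null_set_integrable => //; [exact: measurable_fun_set1|exact: lebesgue_measure_set1]. Qed.

Lemma integrable_cst_itv (a b k : R) :
  mu.-integrable [set` Interval (BRight a) (BRight b)] (EFin \o cst k).
Proof.
apply: measurable_bounded_integrable => //.
  have := lebesgue_measure_itv `]a, b]; rewrite /= => ->; case: ifP => // _; rewrite -EFinB ltry //.
exact: bounded_cst.
Qed.

Lemma Rint_cst_oc (a b k : R) : a <= b ->
  Rintegral mu `]a, b] (fun _ => k) = k * (b - a).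
Proof.
move=> ab; rewrite Rintegral_cst //.
have := lebesgue_measure_itv `]a, b]; rewrite /= => ->; rewrite lte_fin.
case: ltP => [_|ba] //=.
have -> : b = a by apply/eqP; rewrite eq_le ab ba.
by rewrite subrr mulr0.
Qed.

Lemma integrableU2 (A B : set R) (f : R -> R) : measurable A -> measurable B ->
  [disjoint A & B] ->
  mu.-integrable A (EFin \o f) -> mu.-integrable B (EFin \o f) ->
  mu.-integrable (A `|` B) (EFin \o f).
Proof.
move=> mA mB dAB iA iB.
apply/integrable_mkcond; first exact: measurableU.
move/integrable_mkcond: iA => /(_ mA) iA.
move/integrable_mkcond: iB => /(_ mB) iB.
have := integrableD _ iA iB => /(_ measurableT).
apply: eq_integrable => //= x _.
rewrite /patch.
have dj : ~ (A x /\ B x).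
  by move=> [xA xB]; move: dAB; rewrite disj_set2E => /eqP; apply/eqP/set0P; exists x.
have [xA|nA] := boolP (x \in A); have [xB|nB] := boolP (x \in B).
- by exfalso; apply: dj; split; apply: set_mem.
- rewrite mem_set /=; last by left; apply: set_mem.
  by rewrite /point /= adde0.
- rewrite mem_set /=; last by right; apply: set_mem.
  by rewrite /point /= add0e.
- rewrite memNset /=; first by rewrite /point /= adde0.
  by case=> h; [move/mem_set: h; apply/negP|move/mem_set: h; apply/negP].
Qed.


Lemma split_int (f : R -> R) (b t v : R) : 0 <= b -> b <= t ->
  mu.-integrable `[0, b] (EFin \o f) ->
  (forall s, b < s <= t -> f s = v) ->
  mu.-integrable `[0, t] (EFin \o f) /\
  Rintegral mu `[0, t] f = Rintegral mu `[0, b] f + v * (t - b).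
Proof.
move=> b0 bt ib hf.
have E : `[0, t]%classic = `[0, b]%classic `|` `]b, t]%classic :> set R.
  by apply: itv_bndbnd_setU; rewrite bnd_simp.
have dj : [disjoint `[0, b]%classic & `]b, t]%classic ].
  rewrite disj_set2E; apply/eqP/seteqP; split => // x [] /=.
  by rewrite !in_itv /= => /andP[_ xb] /andP[bx _]; move: (lt_le_trans bx xb); rewrite ltxx.
have ioc : mu.-integrable `]b, t] (EFin \o f).
  apply: (eq_integrable _ (EFin \o cst v) _ _ (integrable_cst_itv b t v)) => //.
  by move=> s; rewrite inE /= in_itv /= => /andP[bs st]; rewrite hf // bs st.
have iU : mu.-integrable `[0, t] (EFin \o f) by rewrite E; exact: integrableU2.
split => //.
rewrite E Rintegral_setU //; last by rewrite -E.
congr (_ + _); rewrite -Rint_cst_oc //; apply: eq_Rintegral => s.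
by rewrite inE /= in_itv /= => /andP[bs st]; rewrite hf // bs st.
Qed.

End Ana.


Lemma count_iota_le (k K : nat) : (k <= K)%N ->
  count (fun l => (l <= k)%N) (iota 1 K) = k.
Proof.
move=> kK; rewrite -(subnKC kK) iotaD count_cat.
rewrite (eq_in_count (a2 := predT)); last first.
  by move=> l; rewrite mem_iota => /andP[_]; rewrite add1n ltnS => ->.
rewrite count_predT size_iota (eq_in_count (a2 := pred0)); last first.
  move=> l; rewrite mem_iota => /andP[h _] /=; apply/negbTE.
  by rewrite -ltnNge (leq_trans _ h) // add1n.
by rewrite count_pred0 addn0.
Qed.

Section Part2.
Variables (R : realType) (n m : nat) (alpha : 'I_m.+1 -> 'I_n -> bool) (r : R).
Hypothesis r0 : 0 < r.
Variable acts : seq ('I_m.+1 * R).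
Hypothesis pa : posl acts.
Variable T : R.
Hypothesis T0 : 0 < T.
Variables x0 y0 th0 : 'I_n -> R.
Local Notation mu := (@lebesgue_measure R).

Let K := size acts.
Definition tau k := (nth (ord_max, 0) acts k).2.
Definition grp k := (nth (ord_max, 0) acts k).1.
Definition Ssum := \sum_(0 <= k < K) tau k.
Definition cc := (Ssum + 1) / T.
Definition bp k := (\sum_(0 <= l < k) tau l) / cc.
Definition Bl := [seq bp k | k <- iota 1 K].
Definition nu (s : R) := grp (count (fun b => b < s) Bl).
Definition uu (s : R) := cc.

Lemma tau_ge0 k : 0 <= tau k.
Proof.
rewrite /tau; case: (ltnP k K) => kK; last by rewrite nth_default.
by apply: ltW; move/allP: pa; apply; exact: mem_nth.
Qed.

Lemma Ssum_ge0 : 0 <= Ssum.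
Proof. by apply: sumr_ge0 => i _; exact: tau_ge0. Qed.

Lemma cc_gt0 : 0 < cc.
Proof. by rewrite divr_gt0 // ltr_wpDl // Ssum_ge0. Qed.

Lemma bp0 : bp 0 = 0.
Proof. by rewrite /bp big_geq // mul0r. Qed.

Lemma bpS k : bp k.+1 = bp k + tau k / cc.
Proof. by rewrite /bp big_nat_recr //= mulrDl. Qed.

Lemma bp_le k k' : (k <= k')%N -> bp k <= bp k'.
Proof.
move=> kk; rewrite /bp ler_wpM2r //; first by rewrite invr_ge0 ltW // cc_gt0.
rewrite (big_cat_nat (leq0n k) kk) /= lerDl.
by apply: sumr_ge0 => i _; exact: tau_ge0.
Qed.

Lemma bp_ge0 k : 0 <= bp k.
Proof. by rewrite -bp0 bp_le. Qed.

Lemma nu_piece k s : (k < K)%N -> ((0 < k)%N -> bp k < s) -> s <= bp k.+1 ->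
  nu s = grp k.
Proof.
move=> kK h1 h2; rewrite /nu /Bl count_map.
rewrite (eq_in_count (a2 := fun l => (l <= k)%N)); last first.
  move=> l; rewrite mem_iota => /andP[l1 _] /=.
  case: (leqP l k) => lk.
    by apply: (le_lt_trans (bp_le lk)); apply: h1; exact: (leq_trans l1 lk).
  by apply/negbTE; rewrite -leNgt (le_trans h2) // bp_le.
by rewrite count_iota_le // ltnW.
Qed.


Definition fth (j : 'I_n) (s : R) := (1 - (alpha (nu s) j)%:R) * uu s / r.
Definition thf (t : R) (j : 'I_n) :=
  th0 j + Rintegral mu `[0, t] (fun s => (1 - (alpha (nu s) j)%:R) * uu s / r).
Definition fx (j : 'I_n) (s : R) := (alpha (nu s) j)%:R * cos (thf s j) * uu s.
Definition fy (j : 'I_n) (s : R) := (alpha (nu s) j)%:R * sin (thf s j) * uu s.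
Definition xf (t : R) (j : 'I_n) :=
  x0 j + Rintegral mu `[0, t] (fun s => (alpha (nu s) j)%:R * cos (thf s j) * uu s).
Definition yf (t : R) (j : 'I_n) :=
  y0 j + Rintegral mu `[0, t] (fun s => (alpha (nu s) j)%:R * sin (thf s j) * uu s).

Definition RP k := run alpha r (take k acts) (x0, y0, th0).

Lemma RPS k : (k < K)%N -> RP k.+1 = step alpha r (grp k) (tau k) (RP k).
Proof. by move=> kK; rewrite /RP (take_nth (ord_max, 0)) // /run foldl_rcons. Qed.

Lemma step_comp i t (s : state R n) j :
  [/\ (step alpha r i t s).1.1 j = s.1.1 j + (alpha i j)%:R * t * cos (s.2 j),
      (step alpha r i t s).1.2 j = s.1.2 j + (alpha i j)%:R * t * sin (s.2 j)
    & (step alpha r i t s).2 j = s.2 j + (1 - (alpha i j)%:R) * t / r].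
Proof. by case: s => [[x y] th]. Qed.

Lemma Qind j k : (k <= K)%N ->
  [/\ mu.-integrable `[0, bp k] (EFin \o fth j),
      mu.-integrable `[0, bp k] (EFin \o fx j) &
      mu.-integrable `[0, bp k] (EFin \o fy j)] /\
  [/\ thf (bp k) j = (RP k).2 j,
      xf (bp k) j = (RP k).1.1 j &
      yf (bp k) j = (RP k).1.2 j].
Proof.
have ccn : cc != 0 by rewrite gt_eqF // cc_gt0.
have rn : r != 0 by rewrite gt_eqF.
elim: k => [_|k IH kK].
  rewrite bp0 /thf /xf /yf !set_itv1 !Rintegral_set1 !addr0 /RP take0 /=.
  split; [split; exact: integrable_set1|by []].
have kK' : (k < K)%N by [].
have [[ith ix iy] [eth ex ey]] := IH (ltnW kK).
pose a : R := (alpha (grp k) j)%:R.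
have hth : forall t, bp k <= t <= bp k.+1 ->
    mu.-integrable `[0, t] (EFin \o fth j) /\
    Rintegral mu `[0, t] (fth j) =
      Rintegral mu `[0, bp k] (fth j) + (1 - a) * cc / r * (t - bp k).
  move=> t /andP[t1 t2]; apply: split_int => //; first exact: bp_ge0.
  move=> s /andP[s1 s2]; rewrite /fth /uu (nu_piece kK') //.
  exact: le_trans t2.
have thp : forall s, bp k <= s <= bp k.+1 ->
    thf s j = (RP k).2 j + (1 - a) * cc / r * (s - bp k).
  move=> s hs; rewrite -eth /thf.
  have [_ E] := hth s hs; rewrite /fth in E; rewrite E; ring.
have hx : forall s, bp k < s <= bp k.+1 ->
    fx j s = a * cos ((RP k).2 j) * cc /\ fy j s = a * sin ((RP k).2 j) * cc.
  move=> s /andP[s1 s2]; rewrite /fx /fy /uu (nu_piece kK') // -/a.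
  rewrite thp; last by rewrite ltW.
  rewrite /a; case: (alpha (grp k) j) => /=; last by rewrite !mul0r.
  by rewrite subrr !mul0r addr0.
have bk : bp k <= bp k.+1 by rewrite bp_le.
have [ixS ExS] := split_int (bp_ge0 k) bk ix (fun s hs => (hx s hs).1).
have [iyS EyS] := split_int (bp_ge0 k) bk iy (fun s hs => (hx s hs).2).
have hb : bp k <= bp k.+1 <= bp k.+1 by rewrite bk lexx.
have [ithS EthS] := hth _ hb.
split; first by [].
rewrite RPS //; have [-> -> ->] := step_comp (grp k) (tau k) (RP k) j.
rewrite -/a -ex -ey.
have eth' : Rintegral mu `[0, bp k] (fth j) = (RP k).2 j - th0 j.
  by rewrite -eth /thf; ring.
have -> : thf (bp k.+1) j = th0 j + Rintegral mu `[0, bp k.+1] (fth j) by [].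
have -> : xf (bp k.+1) j = x0 j + Rintegral mu `[0, bp k.+1] (fx j) by [].
have -> : xf (bp k) j = x0 j + Rintegral mu `[0, bp k] (fx j) by [].
have -> : yf (bp k.+1) j = y0 j + Rintegral mu `[0, bp k.+1] (fy j) by [].
have -> : yf (bp k) j = y0 j + Rintegral mu `[0, bp k] (fy j) by [].
rewrite EthS ExS EyS eth' bpS.
have -> : bp k + tau k / cc - bp k = tau k / cc by ring.
by split; field; rewrite ?rn ?ccn.
Qed.


Lemma reach_run : reachable alpha r x0 y0 th0 T
  (posmx (run alpha r acts (x0, y0, th0)).1.1 (run alpha r acts (x0, y0, th0)).1.2).
Proof.
exists nu, uu, xf, yf, thf, (bp K); split.
- exists Bl => t1 t2 _ t12 _ H; rewrite /nu; congr grp.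
  apply: eq_in_count => b bB /=; have := H b bB.
  case: (ltP b t1) => bt1.
    by move=> _; rewrite (lt_le_trans bt1 t12).
  by case: (ltP b t2) => // bt2 h; exfalso; apply: h; rewrite /= ltW.
- split.
  + exact: measurable_cst.
  + by move=> t _; rewrite /uu cc_gt0.
  + have i0 : mu.-integrable `[0, 0] (EFin \o uu).
      by rewrite set_itv1; exact: integrable_set1.
    by have [] := @split_int R uu 0 T cc (lexx 0) (ltW T0) i0 (fun _ _ => erefl).
- by move=> t _ j; split.
- rewrite bp_ge0 /=; rewrite /bp -/Ssum /cc.
  rewrite ler_pdivrMr; last by rewrite divr_gt0 // ltr_wpDl // Ssum_ge0.
  by rewrite mulrCA divff ?gt_eqF // mulr1 lerDl.
- congr posmx; apply/funext => j.
    by have [_ [_ -> _]] := Qind j (leqnn K); rewrite /RP take_size.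
  by have [_ [_ _ ->]] := Qind j (leqnn K); rewrite /RP take_size.
Qed.

End Part2.
Theorem mainTheorem6 (R : realType) (n m : nat)
  (alpha : 'I_m.+1 -> 'I_n -> bool) (r : R) :
  0 < r -> standing_assumptions alpha ->
  (* (i) single-robot translations by finite activation sequences *)
  (forall (x0 y0 th0 : 'I_n -> R) (k : 'I_n) (v : R * R),
     exists acts : seq ('I_m.+1 * R),
       (forall a, a \in acts -> 0 < a.2) /\
       let: (x, y, _) := run alpha r acts (x0, y0, th0) in
       forall j : 'I_n,
         x j = x0 j + (if j == k then v.1 else 0) /\
         y j = y0 j + (if j == k then v.2 else 0)) /\
  (* (ii) STLC in positions at every initial state *)
  (forall x0 y0 th0 : 'I_n -> R, STLC_positions alpha r x0 y0 th0).
Proof.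
move=> r0 H; split.
  move=> x0 y0 th0 k v; have [acts [pa E]] := move_one r0 H x0 y0 th0 k v.
  exists acts; split; first by move=> a ain; move/allP: pa => /(_ a ain).
  case Er: (run alpha r acts (x0, y0, th0)) => [[x y] th] j.
  by have := E j; rewrite Er.
move=> x0 y0 th0 T T0.
suff -> : reachable alpha r x0 y0 th0 T = setT by rewrite interiorT.
apply/seteqP; split => // p _.
pose d := fun j => (p j 0 - x0 j, p j 1 - y0 j).
have [acts [pa E]] := move_all r0 H x0 y0 th0 d (enum_uniq 'I_n).
suff -> : p = posmx (run alpha r acts (x0, y0, th0)).1.1
                    (run alpha r acts (x0, y0, th0)).1.2 by exact: reach_run.
apply/matrixP => j k; rewrite /posmx mxE; have [-> ->] := E j.
rewrite mem_enum /d /=.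
have : (k == 0) || (k == 1) by case: k => [[|[|]]].
by case/orP => /eqP -> /=; rewrite addrC subrK.
Qed.
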